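(* Let $k\in\mathbb{N}_0\cup\{\infty\}$, let $E,F$ be locally convex super vector spaces, $\mathcal{U}\subseteq\overline{E}^{(k)}$ an open subfunctor and $f\colon\mathcal{U}\to\overline{F}^{(k)}$ a natural transformation such that every $f_\Lambda$ ($\Lambda\in\mathbf{Gr}^{(k)}$) is smooth. Let $n,m\in\mathbb{N}$ with $\Lambda_m\in\mathbf{Gr}^{(k)}$, let $x\in\mathcal{U}_{\mathbb{R}}\subseteq\mathcal{U}_{\Lambda_m}$, and for $1\le i\le n$ let $y_i\in\lambda_{I_i}E_{|I_i|\bmod 2}\subseteq\overline{E}^{(k)}_{\Lambda_m}$ with $\emptyset\neq I_i\subseteq\{1,\dots,m\}$. Then $$d^nf_{\Lambda_m}(x)(y_1,\dots,y_n)\in\lambda_{I_1}\cdots\lambda_{I_n}F_{\ell\bmod 2},\qquad \ell:=\Big|\bigcup_{i=1}^nI_i\Big|,$$ and if the sets $I_1,\dots,I_n$ are not pairwise disjoint, then $d^nf_{\Lambda_m}(x)(y_1,\dots,y_n)=0$.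
   Context: Grassmann algebras: $\Lambda_k=\mathbb{R}[\lambda_1,\dots,\lambda_k]$ with $\lambda_i\lambda_j=-\lambda_j\lambda_i$, $\Lambda_0=\mathbb{R}$, basis $\lambda_I$ ($I\subseteq\{1..k\}$, $\lambda_I=\lambda_{i_1}\cdots\lambda_{i_r}$ for $i_1<\dots<i_r$), grading $\Lambda_{\bar 0},\Lambda_{\bar 1}$ by parity of $|I|$. $\mathbf{Gr}^{(k)}$: category of $\Lambda_0,\dots,\Lambda_k$ with parity-preserving unital algebra homomorphisms. For a locally convex super vector space $E=E_0\oplus E_1$, $\overline{E}^{(k)}_\Lambda=(E_0\otimes\Lambda_{\bar0})\oplus(E_1\otimes\Lambda_{\bar1})$ (product topology), functorial via $\mathrm{id}\otimes\varrho$; for $n\le m$ we identify $\overline{E}^{(k)}_{\Lambda_n}\subseteq\overline{E}^{(k)}_{\Lambda_m}$ via the inclusion $\Lambda_n\hookrightarrow\Lambda_m$, $\lambda_j\mapsto\lambda_j$; in particular $\overline{E}_{\mathbb{R}}=E_0$ and $\mathcal{U}_{\mathbb{R}}\subseteq\mathcal{U}_{\Lambda_m}$. An open subfunctor $\mathcal{U}$ consists of open $\mathcal{U}_\Lambda\subseteq\overline{E}^{(k)}_\Lambda$ stable under all $\overline{E}^{(k)}_\varrho$. Smoothness is Bastiani smoothness; $d^n$ denotes iterated directional derivatives. *)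

(* Defs.v *)
From Stdlib Require Import Reals FunctionalExtensionality.
From mathcomp Require Import all_boot.
Set Implicit Arguments. Unset Strict Implicit. Unset Printing Implicit Defensive.

Local Open Scope R_scope.

Record lcs := LCS {
  lcs_car :> Type;
  vzero : lcs_car;
  vadd : lcs_car -> lcs_car -> lcs_car;
  vopp : lcs_car -> lcs_car;
  vscal : R -> lcs_car -> lcs_car;
  vaddA : forall x y z, vadd x (vadd y z) = vadd (vadd x y) z;
  vaddC : forall x y, vadd x y = vadd y x;
  vadd0 : forall x, vadd vzero x = x;
  vaddN : forall x, vadd (vopp x) x = vzero;
  vscal1 : forall x, vscal 1 x = x;
  vscalA : forall a b x, vscal a (vscal b x) = vscal (a * b) x;
  vscalDr : forall a x y, vscal a (vadd x y) = vadd (vscal a x) (vscal a y);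
  vscalDl : forall a b x, vscal (a + b) x = vadd (vscal a x) (vscal b x);
  sidx : Type;
  snorm : sidx -> lcs_car -> R;
  snorm_add : forall i x y, snorm i (vadd x y) <= snorm i x + snorm i y;
  snorm_scal : forall i a x, snorm i (vscal a x) = Rabs a * snorm i x;
  snorm_sep : forall x, (forall i, snorm i x = 0) -> x = vzero
}.
Arguments vzero {l}.
Arguments vadd {l}.
Arguments vopp {l}.
Arguments vscal {l}.
Arguments snorm {l}.

Definition vsub (X : lcs) (x y : X) : X := vadd x (vopp y).

Definition is_open (X : lcs) (U : X -> Prop) : Prop :=
  forall x, U x -> exists (L : list (sidx X)) (d : R), 0 < d /\
    forall x', (forall i, List.In i L -> snorm i (vsub x' x) < d) -> U x'.

(* D is the family of iterated directional derivatives of f on U: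
   D x [::] = f x and
   D x (rcons ys y) = lim_{t->0} (D (x + t y) ys - D x ys) / t,
   i.e. d^{n+1} f(x)(y_1,...,y_n,y) = d (d^n f(.)(y_1..y_n))(x)(y). *)
Definition is_dfamily (X Y : lcs) (U : X -> Prop) (f : X -> Y)
  (D : X -> seq X -> Y) : Prop :=
  (forall x, U x -> D x [::] = f x) /\
  (forall x ys y, U x -> forall (j : sidx Y) eps, 0 < eps ->
     exists d, 0 < d /\ forall t, t <> 0 -> Rabs t < d ->
       U (vadd x (vscal t y)) ->
       snorm j (vsub (vscal (/ t) (vsub (D (vadd x (vscal t y)) ys) (D x ys)))
                     (D x (rcons ys y))) < eps).

(* joint continuity of each d^n f on U x X^n (product topology) *)
Definition dcont (X Y : lcs) (U : X -> Prop) (D : X -> seq X -> Y) : Prop :=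
  forall x ys, U x -> forall (j : sidx Y) eps, 0 < eps ->
    exists (L : list (sidx X)) (d : R), 0 < d /\
      forall x' ys', U x' -> size ys' = size ys ->
        (forall i, List.In i L -> snorm i (vsub x' x) < d /\
           forall k : nat, (k < size ys)%N ->
             snorm i (vsub (nth vzero ys' k) (nth vzero ys k)) < d) ->
        snorm j (vsub (D x' ys') (D x ys)) < eps.

Definition bsmooth (X Y : lcs) (U : X -> Prop) (f : X -> Y) : Prop :=
  exists D, is_dfamily U f D /\ dcont U D.

Record slcs := SLCS { sev : lcs; sod : lcs }.
Definition par (E : slcs) (b : bool) : lcs := if b then sod E else sev E.

Definition pcast (E : slcs) (b b' : bool) : par E b -> par E b' :=
  match b as b0, b' as b1 return par E b0 -> par E b1 with
  | true, true => fun x => x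
  | false, false => fun x => x
  | true, false => fun _ => @vzero (sev E)
  | false, true => fun _ => @vzero (sod E)
  end.
Arguments pcast E b b' : clear implicits.

(* Grassmann algebra Lambda_m, generators lambda_1..lambda_m indexed by *)
(* 'I_m; elements = coefficient functions on the basis lambda_I.        *)
Definition grass (m : nat) := {set 'I_m} -> R.
Definition gbasis m (I : {set 'I_m}) : grass m :=
  fun J => if J == I then 1 else 0.
Definition gadd m (u v : grass m) : grass m := fun I => u I + v I.
Definition gscale m (c : R) (u : grass m) : grass m := fun I => c * u I.
Definition ninv m (I J : {set 'I_m}) : nat :=
  #|[set p : 'I_m * 'I_m | (p.1 \in I) && (p.2 \in J) && (p.2 < p.1)%N]|.
(* lambda_I lambda_J = gsign I J K summed over K *)
Definition gsign m (I J K : {set 'I_m}) : R :=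
  if [disjoint I & J] && (K == I :|: J) then (-1) ^ (ninv I J) else 0.
Definition gmul m (u v : grass m) : grass m := fun K =>
  \big[Rplus/0]_(I : {set 'I_m}) \big[Rplus/0]_(J : {set 'I_m})
     (u I * v J * gsign I J K).
Definition geven m (u : grass m) : Prop := forall I : {set 'I_m}, odd #|I| -> u I = 0.
Definition godd m (u : grass m) : Prop := forall I : {set 'I_m}, ~~ odd #|I| -> u I = 0.

Record is_grhom a b (r : grass a -> grass b) : Prop := {
  grhom_add : forall u v, r (gadd u v) = gadd (r u) (r v);
  grhom_scale : forall c u, r (gscale c u) = gscale c (r u);
  grhom_one : r (gbasis set0) = gbasis set0;
  grhom_mul : forall u v, r (gmul u v) = gmul (r u) (r v);
  grhom_even : forall u, geven u -> geven (r u);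
  grhom_odd : forall u, godd u -> godd (r u)
}.

(* objects of Gr^(k): Lambda_n with n <= k; k = None means k = infinity *)
Definition inGr (k : option nat) (n : nat) : Prop :=
  match k with None => True | Some k => (n <= k)%N end.

(* \bar E_{Lambda_m} = (E_0 (x) Lambda_even) (+) (E_1 (x) Lambda_odd):   *)
(* component at lambda_I lies in E_{|I| mod 2}; product topology.        *)
Section Ebar.
Variables (E : slcs) (m : nat).
Definition ebar_car := forall I : {set 'I_m}, par E (odd #|I|).
Definition eb_zero : ebar_car := fun I => vzero.
Definition eb_add (x y : ebar_car) : ebar_car := fun I => vadd (x I) (y I).
Definition eb_opp (x : ebar_car) : ebar_car := fun I => vopp (x I).
Definition eb_scal (a : R) (x : ebar_car) : ebar_car := fun I => vscal a (x I).
Definition eb_sidx := {I : {set 'I_m} & sidx (par E (odd #|I|))}.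
Definition eb_snorm (s : eb_sidx) (x : ebar_car) : R :=
  snorm (projT2 s) (x (projT1 s)).

Ltac fe := intros; apply functional_extensionality_dep; intro; unfold eb_add,
  eb_opp, eb_scal, eb_zero.
Lemma eb_addA x y z : eb_add x (eb_add y z) = eb_add (eb_add x y) z.
Proof. fe; apply vaddA. Qed.
Lemma eb_addC x y : eb_add x y = eb_add y x.
Proof. fe; apply vaddC. Qed.
Lemma eb_add0 x : eb_add eb_zero x = x.
Proof. fe; apply vadd0. Qed.
Lemma eb_addN x : eb_add (eb_opp x) x = eb_zero.
Proof. fe; apply vaddN. Qed.
Lemma eb_scal1 x : eb_scal 1 x = x.
Proof. fe; apply vscal1. Qed.
Lemma eb_scalA a b x : eb_scal a (eb_scal b x) = eb_scal (a * b) x.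
Proof. fe; apply vscalA. Qed.
Lemma eb_scalDr a x y : eb_scal a (eb_add x y) = eb_add (eb_scal a x) (eb_scal a y).
Proof. fe; apply vscalDr. Qed.
Lemma eb_scalDl a b x : eb_scal (a + b) x = eb_add (eb_scal a x) (eb_scal b x).
Proof. fe; apply vscalDl. Qed.
Lemma eb_snorm_add i x y : eb_snorm i (eb_add x y) <= eb_snorm i x + eb_snorm i y.
Proof. apply snorm_add. Qed.
Lemma eb_snorm_scal i a x : eb_snorm i (eb_scal a x) = Rabs a * eb_snorm i x.
Proof. apply snorm_scal. Qed.
Lemma eb_snorm_sep x : (forall i, eb_snorm i x = 0) -> x = eb_zero.
Proof.
move=> H; apply functional_extensionality_dep => I; apply snorm_sep => i.
exact: (H (existT _ I i)).
Qed.

Definition ebar : lcs :=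
  @LCS ebar_car eb_zero eb_add eb_opp eb_scal eb_addA eb_addC eb_add0 eb_addN
    eb_scal1 eb_scalA eb_scalDr eb_scalDl eb_sidx eb_snorm eb_snorm_add
    eb_snorm_scal eb_snorm_sep.
End Ebar.

(* \bar E_rho = id (x) rho for rho : Lambda_a -> Lambda_b *)
Definition ebar_map (E : slcs) a b (r : grass a -> grass b) (x : ebar E a)
  : ebar E b :=
  fun J => \big[vadd/vzero]_(I : {set 'I_a})
     vscal (r (gbasis I) J) (pcast E (odd #|I|) (odd #|J|) (x I)).

Arguments ebar_map E [a b] r x.

(* u . w  for u in Lambda_m and w in E_p: the element u (x) w of \bar E *)
Definition embed (E : slcs) m (u : grass m) (p : bool) (w : par E p) : ebar E m :=
  fun K => vscal (u K) (pcast E p (odd #|K|) w).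

Arguments embed {E m} u p w.

Definition is_open_subfunctor (k : option nat) (E : slcs)
  (U : forall n, ebar E n -> Prop) : Prop :=
  (forall n, inGr k n -> is_open (U n)) /\
  (forall a b (r : grass a -> grass b), inGr k a -> inGr k b -> is_grhom r ->
     forall x, U a x -> U b (ebar_map E r x)).

Definition is_nat_trans (k : option nat) (E F : slcs)
  (U : forall n, ebar E n -> Prop) (f : forall n, ebar E n -> ebar F n) : Prop :=
  forall a b (r : grass a -> grass b), inGr k a -> inGr k b -> is_grhom r ->
    forall x, U a x -> f b (ebar_map E r x) = ebar_map F r (f a x).

(* Main.v *)
Require Import Defs.
From Stdlib Require Import Reals Lra Psatz Classical FunctionalExtensionality.
From mathcomp Require Import all_boot zify.
Set Implicit Arguments. Unset Strict Implicit. Unset Printing Implicit Defensive.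
Local Open Scope R_scope.

Lemma vaddr0 (X : lcs) (x : X) : vadd x vzero = x.
Proof. by rewrite vaddC vadd0. Qed.
Lemma vaddrN (X : lcs) (x : X) : vadd x (vopp x) = vzero.
Proof. by rewrite vaddC vaddN. Qed.
Lemma vadd_cancel (X : lcs) (a b c : X) : vadd a b = vadd a c -> b = c.
Proof. move=> H; by rewrite -[b]vadd0 -(vaddN a) -vaddA H vaddA vaddN vadd0. Qed.
Lemma vscal0 (X : lcs) (x : X) : vscal 0 x = vzero.
Proof.
apply (@vadd_cancel _ (vscal 0 x)). by rewrite vaddr0 -vscalDl Rplus_0_l.
Qed.
Lemma vscalx0 (X : lcs) a : vscal a (vzero : X) = vzero.
Proof. by rewrite -{1}(vscal0 (vzero : X)) vscalA Rmult_0_r vscal0. Qed.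
Lemma vopp_scal (X : lcs) (x : X) : vopp x = vscal (-1) x.
Proof.
apply (@vadd_cancel _ x). rewrite vaddrN -{1}(vscal1 x) -vscalDl.
by rewrite Rplus_opp_r vscal0.
Qed.
Lemma vopp_opp (X : lcs) (x : X) : vopp (vopp x) = x.
Proof. apply (@vadd_cancel _ (vopp x)). by rewrite vaddrN vaddN. Qed.
Lemma vsub_eq0 (X : lcs) (a b : X) : vsub a b = vzero -> a = b.
Proof. rewrite /vsub => H. by rewrite -[a]vaddr0 -(vaddN b) vaddA H vadd0. Qed.
Lemma vsub_trans (X : lcs) (a b c : X) : vadd (vsub a c) (vsub c b) = vsub a b.
Proof. by rewrite /vsub -vaddA (vaddA (vopp c)) vaddN vadd0. Qed.
Lemma vsub_sym (X : lcs) (a c : X) : vsub a c = vscal (-1) (vsub c a).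
Proof. by rewrite /vsub vscalDr -!vopp_scal vopp_opp vaddC. Qed.
Lemma vsub_addl (X : lcs) (z w : X) : vsub (vadd z w) z = w.
Proof. by rewrite /vsub vaddC vaddA vaddN vadd0. Qed.
Lemma vscal_sub (X : lcs) a (x y : X) : vscal a (vsub x y) = vsub (vscal a x) (vscal a y).
Proof. by rewrite /vsub vscalDr !vopp_scal !vscalA Rmult_comm. Qed.
Lemma snorm0 (X : lcs) i : snorm i (vzero : X) = 0.
Proof. by rewrite -(vscal0 (vzero : X)) snorm_scal Rabs_R0 Rmult_0_l. Qed.
Lemma snorm_ge0 (X : lcs) i (x : X) : 0 <= snorm i x.
Proof.
have H := snorm_add i x (vopp x).
rewrite vaddrN snorm0 vopp_scal snorm_scal Rabs_Ropp Rabs_R1 in H. lra.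
Qed.
Lemma snorm_sym (X : lcs) i (a c : X) : snorm i (vsub a c) = snorm i (vsub c a).
Proof. by rewrite vsub_sym snorm_scal Rabs_Ropp Rabs_R1 Rmult_1_l. Qed.

Lemma lim_unique (Y : lcs) (g : R -> Y) (P : R -> Prop) (a b : Y) :
 (forall d, 0 < d -> exists t, t <> 0 /\ Rabs t < d /\ P t) ->
 (forall j eps, 0 < eps -> exists d, 0 < d /\ forall t, t <> 0 -> Rabs t < d -> P t ->
      snorm j (vsub (g t) a) < eps) ->
 (forall j eps, 0 < eps -> exists d, 0 < d /\ forall t, t <> 0 -> Rabs t < d -> P t ->
      snorm j (vsub (g t) b) < eps) -> a = b.
Proof.
move=> Hex Ha Hb. apply vsub_eq0, snorm_sep => j.
apply Rle_antisym; last apply snorm_ge0.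
case: (Rle_lt_dec (snorm j (vsub a b)) 0) => // Hpos; exfalso.
have He : 0 < snorm j (vsub a b) / 2 by lra.
have [da [Hda Ha']] := Ha j _ He. have [db [Hdb Hb']] := Hb j _ He.
have [t [Ht0 [Htd Pt]]] := Hex (Rmin da db) (Rmin_pos _ _ Hda Hdb).
have H1 := Ha' t Ht0 (Rlt_le_trans _ _ _ Htd (Rmin_l _ _)) Pt.
have H2 := Hb' t Ht0 (Rlt_le_trans _ _ _ Htd (Rmin_r _ _)) Pt.
have := snorm_add j (vsub a (g t)) (vsub (g t) b).
rewrite vsub_trans (snorm_sym j a (g t)). lra.
Qed.

Lemma fold_bound (X : lcs) (y : X) (L : list (sidx X)) :
  0 <= List.fold_right (fun i acc => snorm i y + acc) 0 L /\
  forall i, List.In i L -> snorm i y <= List.fold_right (fun i acc => snorm i y + acc) 0 L.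
Proof.
elim: L => [|a L [H0 H]] /=; split; try lra; try tauto.
- have := snorm_ge0 a y; lra.
- move=> i [<-|Hi]; first lra. have := H i Hi; have := snorm_ge0 a y; lra.
Qed.

Lemma small_t (X : lcs) (U : X -> Prop) z y : is_open U -> U z ->
  forall d0, 0 < d0 -> exists t, t <> 0 /\ Rabs t < d0 /\ U (vadd z (vscal t y)).
Proof.
move=> HU Hz d0 Hd0. have [L [d [Hd HL]]] := HU z Hz.
have [S0 HS] := fold_bound y L.
set S := List.fold_right _ 0 L in S0 HS.
set m0 := Rmin d0 d.
have Hm0 : 0 < m0 by apply Rmin_pos.
have Hm1 : m0 <= d0 by apply Rmin_l.
have Hm2 : m0 <= d by apply Rmin_r.
set t := m0 / (2 * (S + 1)).
have Ht : t * (2 * (S + 1)) = m0 by rewrite /t; field; lra.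
have Htp : 0 < t by rewrite /t; apply Rdiv_lt_0_compat; lra.
exists t; split; first lra.
split; first by rewrite Rabs_pos_eq; nra.
apply HL => i Hi. rewrite vsub_addl snorm_scal Rabs_pos_eq; last lra.
have := HS i Hi. have := snorm_ge0 i y. nra.
Qed.

Lemma dstep (X Y : lcs) (U : X -> Prop) (f : X -> Y) (D : X -> seq X -> Y)
 (HUo : is_open U) (HD : is_dfamily U f D) (L : X -> X) (M : Y -> Y)
 (A B : seq X) (y y' : X) :
 (forall z t, L (vadd z (vscal t y)) = vadd (L z) (vscal t y')) ->
 (forall z, U z -> U (L z)) ->
 (forall a b, M (vsub a b) = vsub (M a) (M b)) ->
 (forall a w, M (vscal a w) = vscal a (M w)) ->
 (forall j, exists i c, 0 <= c /\ forall w, snorm j (M w) <= c * snorm i w) ->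
 (forall z, U z -> D (L z) A = M (D z B)) ->
 forall z, U z -> D (L z) (rcons A y') = M (D z (rcons B y)).
Proof.
move=> HL HLU HMs HMz HMb HAB z Hz.
apply: (@lim_unique _
  (fun t => vscal (/t) (vsub (D (L (vadd z (vscal t y))) A) (D (L z) A)))
  (fun t => U (vadd z (vscal t y)))).
- by apply: small_t.
- move=> j eps He. have [d [Hd H]] := HD.2 (L z) A y' (HLU z Hz) j eps He.
  exists d; split=> // t Ht0 Htd Pt. rewrite HL. apply H => //.
  rewrite -HL; by apply HLU.
- move=> j eps He. have [i [c [Hc Hb]]] := HMb j.
  have He' : 0 < eps / (c + 1) by apply Rdiv_lt_0_compat; lra.
  have Hee : eps / (c + 1) * (c + 1) = eps by field; lra.
  have [d [Hd H]] := HD.2 z B y Hz i _ He'.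
  exists d; split=> // t Ht0 Htd Pt.
  rewrite (HAB _ Pt) (HAB _ Hz) -HMs -HMz -HMs.
  eapply Rle_lt_trans; first apply Hb.
  have := H t Ht0 Htd Pt. move: (snorm i _) (snorm_ge0 i (vsub (vscal (/ t) (vsub (D (vadd z (vscal t y)) B) (D z B))) (D z (rcons B y)))) => q Hq Hq'.
  move: Hq'; move: (eps / (c+1)) He' Hee => e' He' Hee Hq'. nra.
Qed.

Lemma dhom (X Y : lcs) (U : X -> Prop) (f : X -> Y) (D : X -> seq X -> Y)
 (HUo : is_open U) (HD : is_dfamily U f D) (B : seq X) (y : X) c :
 c <> 0 -> forall z, U z -> D z (rcons B (vscal c y)) = vscal c (D z (rcons B y)).
Proof.
move=> Hc z Hz.
apply: (@lim_unique _
  (fun t => vscal (/t) (vsub (D (vadd z (vscal t (vscal c y))) B) (D z B)))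
  (fun t => U (vadd z (vscal t (vscal c y))))).
- by apply: small_t.
- move=> j eps He. have [d [Hd H]] := HD.2 z B (vscal c y) Hz j eps He.
  by exists d.
- move=> j eps He.
  have Hac : 0 < Rabs c by apply Rabs_pos_lt.
  have He' : 0 < eps / (Rabs c + 1) by apply Rdiv_lt_0_compat; lra.
  have Hee : eps / (Rabs c + 1) * (Rabs c + 1) = eps by field; lra.
  have [d [Hd H]] := HD.2 z B y Hz j _ He'.
  exists (d / Rabs c); split; first by apply Rdiv_lt_0_compat.
  move=> t Ht0 Htd Pt.
  have Hct : c * t <> 0 by apply Rmult_integral_contrapositive.
  have Hctd : Rabs (c * t) < d.
    rewrite Rabs_mult. have : Rabs t * Rabs c < d / Rabs c * Rabs c by nra.
    have -> : d / Rabs c * Rabs c = d by field; lra. lra.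
  rewrite (vscalA t c y) (Rmult_comm t c) in Pt *.
  have E : forall w : Y, vscal (/t) w = vscal c (vscal (/(c*t)) w).
    move=> w; rewrite vscalA; f_equal; field; lra.
  rewrite E -vscal_sub snorm_scal.
  have := H (c * t) Hct Hctd Pt.
  move: (snorm j _) (snorm_ge0 j (vsub (vscal (/ (c * t)) (vsub (D (vadd z (vscal (c * t) y)) B) (D z B))) (D z (rcons B y)))) => q Hq Hq'.
  move: Hq'; move: (eps / (Rabs c + 1)) He' Hee => e' He' Hee Hq'. nra.
Qed.

Lemma big_only (T : eqType) (A : Type) (op : A -> A -> A) (idx : A) (F : T -> A)
  (a : T) (r : seq T) :
  (forall x, op idx x = x) -> (forall x, op x idx = x) -> uniq r ->
  (forall i, i != a -> F i = idx) ->
  \big[op/idx]_(i <- r) F i = if a \in r then F a else idx.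
Proof.
move=> H1 H2. elim: r => [|b r IH] /=; first by rewrite big_nil.
move=> /andP[Hb Hu] HF. rewrite big_cons inE IH //.
case: (eqVneq a b) => [Hab|Hab] /=.
- by subst; rewrite (negbTE Hb) H2.
- rewrite HF ?H1 //. by rewrite eq_sym.
Qed.

Lemma big_only_fin (T : finType) (A : Type) (op : A -> A -> A) (idx : A) (F : T -> A)
  (a : T) :
  (forall x, op idx x = x) -> (forall x, op x idx = x) ->
  (forall i, i != a -> F i = idx) ->
  \big[op/idx]_(i : T) F i = F a.
Proof.
move=> H1 H2 HF. by rewrite (big_only (a:=a)) ?mem_index_enum ?index_enum_uniq.
Qed.

Lemma big_idx (T : Type) (A : Type) (op : A -> A -> A) (idx : A) (F : T -> A)
  (r : seq T) :
  (forall x, op idx x = x) -> (forall i, F i = idx) ->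
  \big[op/idx]_(i <- r) F i = idx.
Proof.
move=> H1 HF. elim: r => [|b r IH]; first by rewrite big_nil.
by rewrite big_cons HF IH H1.
Qed.

Lemma big_Rmult_l (T : Type) (r : seq T) c (F : T -> R) :
  c * \big[Rplus/0]_(i <- r) F i = \big[Rplus/0]_(i <- r) (c * F i).
Proof.
elim: r => [|b r IH]; first by rewrite !big_nil Rmult_0_r.
rewrite !big_cons -IH; ring.
Qed.

Lemma pcast_id (E : slcs) b (w : par E b) : pcast E b b w = w.
Proof. by case: b w. Qed.
Lemma pcast_scal (E : slcs) b c a (w : par E b) :
  pcast E b c (vscal a w) = vscal a (pcast E b c w).
Proof. by case: b c w => [] [] w //=; rewrite vscalx0. Qed.
Lemma pcast0 (E : slcs) b c : pcast E b c vzero = vzero.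
Proof. by case: b; case: c. Qed.

Lemma gsign_nz m (I J K : {set 'I_m}) :
  gsign I J K <> 0 -> [disjoint I & J] /\ K = I :|: J.
Proof. rewrite /gsign; case: andP => [[Hd /eqP ->]|] //. Qed.

Definition sj m (j0 : 'I_m) (K : {set 'I_m}) : R := if j0 \in K then 2 else 1.
Definition rj m (j0 : 'I_m) (u : grass m) : grass m := fun K => sj j0 K * u K.
Definition dg (E : slcs) m (s : {set 'I_m} -> R) (x : ebar E m) : ebar E m :=
  fun J => vscal (s J) (x J).

Lemma sj_union m (j0 : 'I_m) (I J : {set 'I_m}) : [disjoint I & J] ->
  sj j0 (I :|: J) = sj j0 I * sj j0 J.
Proof.
move=> Hd. rewrite /sj in_setU.
case HI: (j0 \in I); case HJ: (j0 \in J) => /=; try lra.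
by have := disjointFl Hd HJ; rewrite HI.
Qed.

Lemma rj_grhom m (j0 : 'I_m) : is_grhom (@rj m j0).
Proof.
split.
- move=> u v; apply functional_extensionality => K; rewrite /rj /gadd; ring.
- move=> c u; apply functional_extensionality => K; rewrite /rj /gscale; ring.
- apply functional_extensionality => K; rewrite /rj /gbasis /sj.
  case: eqP => [->|_]; rewrite ?in_set0 /=; ring.
- move=> u v; apply functional_extensionality => K; rewrite /rj /gmul.
  rewrite big_Rmult_l. apply eq_bigr => I _. rewrite big_Rmult_l.
  apply eq_bigr => J _.
  case: (Req_dec (gsign I J K) 0) => [->|Hn]; first ring.
  have [Hd ->] := gsign_nz Hn. rewrite sj_union //; ring.
- move=> u Hu I HI; rewrite /rj Hu //; ring.
- move=> u Hu I HI; rewrite /rj Hu //; ring.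
Qed.

Lemma emap_dg (E : slcs) m (s : {set 'I_m} -> R) (r : grass m -> grass m) :
  (forall u K, r u K = s K * u K) -> forall x, ebar_map E r x = dg s x.
Proof.
move=> Hr x. apply functional_extensionality_dep => J.
rewrite /ebar_map (big_only_fin (a:=J)).
- by rewrite Hr /gbasis eqxx Rmult_1_r pcast_id.
- exact: vadd0.
- exact: vaddr0.
- move=> I HI. by rewrite Hr /gbasis eq_sym (negbTE HI) Rmult_0_r vscal0.
Qed.

Definition inc m (u : grass 0) : grass m :=
  fun K => if K == set0 then u set0 else 0.

Lemma set0_I0 (I : {set 'I_0}) : I = set0.
Proof. apply/setP => -[i Hi]. by []. Qed.

Lemma gsign00 m (K : {set 'I_m}) : gsign set0 set0 K = if K == set0 then 1 else 0.
Proof.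
rewrite /gsign setU0.
have -> : [disjoint (set0 : {set 'I_m}) & (set0 : {set 'I_m})].
  by rewrite -setI_eq0 setI0.
have -> : ninv (set0 : {set 'I_m}) set0 = 0%N.
  rewrite /ninv; apply/eqP; rewrite cards_eq0; apply/eqP/setP => p.
  by rewrite !inE.
by case: (K == set0).
Qed.

Lemma inc_grhom m : is_grhom (@inc m).
Proof.
split.
- move=> u v; apply functional_extensionality => K; rewrite /inc /gadd.
  case: (K == set0); ring.
- move=> c u; apply functional_extensionality => K; rewrite /inc /gscale.
  case: (K == set0); ring.
- apply functional_extensionality => K; rewrite /inc /gbasis eqxx. by case: (K == set0).
- move=> u v; apply functional_extensionality => K; rewrite /inc /gmul.
  rewrite (big_only_fin (a:=set0)); [|exact: Rplus_0_l|exact: Rplus_0_r|].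
  2: { move=> I HI. by move: HI; rewrite (set0_I0 I) eqxx. }
  rewrite (big_only_fin (a:=set0)); [|exact: Rplus_0_l|exact: Rplus_0_r|].
  2: { move=> I HI. by move: HI; rewrite (set0_I0 I) eqxx. }
  rewrite (big_only_fin (a:=set0)); [|exact: Rplus_0_l|exact: Rplus_0_r|].
  2: { move=> I HI. apply big_idx; first exact: Rplus_0_l.
       move=> J. rewrite (negbTE HI); ring. }
  rewrite (big_only_fin (a:=set0)); [|exact: Rplus_0_l|exact: Rplus_0_r|].
  2: { move=> J HJ. rewrite (negbTE HJ); ring. }
  rewrite eqxx !gsign00 eqxx. case: (K == set0); ring.
- move=> u Hu I HI; rewrite /inc. case: eqP => // HI0.
  by move: HI; rewrite HI0 cards0.
- move=> u Hu I HI; rewrite /inc. case: eqP => // HI0.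
  apply Hu. by rewrite cards0.
Qed.

Lemma vscal_inj (X : lcs) a b (w : X) : vscal a w = vscal b w -> a <> b -> w = vzero.
Proof.
move=> H Hab.
have H0 : vscal (a - b) w = vzero.
  rewrite /Rminus vscalDl H -vscalDl Rplus_opp_r. exact: vscal0.
rewrite -(vscal1 w) -(Rinv_l (a - b)); last lra.
by rewrite -vscalA H0 vscalx0.
Qed.

Definition prodR (cs : nat -> R) (l : seq nat) : R := foldr (fun i acc => cs i * acc) 1 l.

Lemma prodR_rcons cs l i : prodR cs (rcons l i) = prodR cs l * cs i.
Proof.
elim: l => [|a l IH]; rewrite /prodR /=; first ring.
rewrite -/(prodR cs (rcons l i)) -/(prodR cs l) IH; ring.
Qed.

Lemma nat_all (k : option nat) (E F : slcs) (U : forall n, ebar E n -> Prop)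
  (f : forall n, ebar E n -> ebar F n)
  (HU : is_open_subfunctor k U) (Hf : is_nat_trans k U f) m (Hmk : inGr k m)
  (D : ebar E m -> seq (ebar E m) -> ebar F m) (HD : is_dfamily (U m) (f m) D)
  (j0 : 'I_m) :
  forall (l : seq (ebar E m)) z, U m z ->
    D (dg (sj j0) z) (map (dg (sj j0)) l) = dg (sj j0) (D z l).
Proof.
have Hr : forall u K, rj j0 u K = sj j0 K * u K by [].
have HUr : forall z, U m z -> U m (dg (sj j0) z).
  move=> z Hz; rewrite -(emap_dg (E:=E) Hr).
  exact: (proj2 HU m m (@rj m j0) Hmk Hmk (rj_grhom j0) z Hz).
elim/last_ind => [|l y IH] z Hz.
- rewrite /= (HD.1 _ (HUr z Hz)) (HD.1 _ Hz).
  rewrite -(emap_dg (E:=E) Hr) -(emap_dg (E:=F) Hr). exact: (Hf m m (@rj m j0) Hmk Hmk (rj_grhom j0) z Hz).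
- rewrite map_rcons.
  apply: (@dstep _ _ (U m) (f m) D (HU.1 m Hmk) HD (dg (sj j0)) (dg (sj j0))).
  + move=> w t; apply functional_extensionality_dep => J /=; rewrite /dg /=.
    rewrite /eb_add /eb_scal /= vscalDr; congr vadd; by rewrite !vscalA Rmult_comm.
  + exact: HUr.
  + move=> a b; apply functional_extensionality_dep => J; rewrite /dg /vsub /= /eb_add /eb_opp.
    exact: (vscal_sub (sj j0 J) (a J) (b J)).
  + move=> a w; apply functional_extensionality_dep => J; rewrite /dg /=.
    by rewrite /eb_scal !vscalA Rmult_comm.
  + move=> j; exists j, (Rabs (sj j0 (projT1 j))); split; first exact: Rabs_pos.
    move=> w /=. rewrite /eb_snorm /dg snorm_scal. apply Rle_refl.
  + exact: IH.
  + exact: Hz.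
Qed.

Lemma scale_all (X Y : lcs) (U : X -> Prop) (f : X -> Y) (D : X -> seq X -> Y)
  (HUo : is_open U) (HD : is_dfamily U f D) (cs : nat -> R) (ys : nat -> X) :
  (forall i, cs i <> 0) -> forall l z, U z ->
  D z [seq vscal (cs i) (ys i) | i <- l] = vscal (prodR cs l) (D z [seq ys i | i <- l]).
Proof.
move=> Hc. elim/last_ind => [|l i IH] z Hz.
- by rewrite /= /prodR /= vscal1.
- rewrite !map_rcons (dhom HUo HD _ _ (Hc i) Hz).
  have H := @dstep X Y U f D HUo HD id (vscal (prodR cs l))
     [seq vscal (cs i) (ys i) | i <- l] [seq ys i | i <- l] (ys i) (ys i)
     (fun _ _ => erefl) (fun z Hz => Hz) (fun a b => vscal_sub _ a b).
  rewrite /= in H. rewrite H //.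
  + by rewrite vscalA prodR_rcons Rmult_comm.
  + move=> a w; by rewrite !vscalA Rmult_comm.
  + move=> j; exists j, (Rabs (prodR cs l)); split; first exact: Rabs_pos.
    move=> w; rewrite snorm_scal; apply Rle_refl.
Qed.

Lemma mem_Useq m (Is : nat -> {set 'I_m}) (l : seq nat) x :
  (x \in \bigcup_(i <- l) Is i) = has (fun i => x \in Is i) l.
Proof.
elim: l => [|a l IH]; first by rewrite big_nil in_set0.
by rewrite big_cons in_setU IH.
Qed.

Lemma mem_Uord m (Is : nat -> {set 'I_m}) n x :
  (x \in \bigcup_(i < n) Is i) = has (fun i => x \in Is i) (iota 0 n).
Proof.
apply/bigcupP/hasP => [[i _ Hi]|[i Hi Hx]].
- exists (val i) => //. by rewrite mem_iota add0n ltn_ord.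
- move: Hi; rewrite mem_iota add0n => /andP[_ Hin].
  by exists (Ordinal Hin).
Qed.

Lemma prod_basis m (Is : nat -> {set 'I_m}) (l : seq nat) :
  uniq l -> (forall i j, i \in l -> j \in l -> i <> j -> [disjoint Is i & Is j]) ->
  exists sg, sg <> 0 /\ forall K,
    foldr (@gmul m) (gbasis set0) [seq gbasis (Is i) | i <- l] K =
    sg * gbasis (\bigcup_(i <- l) Is i) K.
Proof.
elim: l => [|a l IH] /=.
- move=> _ _; exists 1; split; first lra. move=> K; rewrite big_nil; ring.
- move=> /andP[Hal Hu] Hd.
  have [sg [Hsg Hl]] : exists sg, sg <> 0 /\ forall K,
    foldr (@gmul m) (gbasis set0) [seq gbasis (Is i) | i <- l] K =
    sg * gbasis (\bigcup_(i <- l) Is i) K.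
    apply: IH => // i j Hi Hj Hij. apply: Hd => //; by rewrite inE ?Hi ?Hj orbT.
  set J := \bigcup_(i <- l) Is i in Hl *.
  have HdJ : [disjoint Is a & J].
    rewrite -setI_eq0; apply/eqP/setP => x; rewrite inE in_set0.
    apply/negbTE/negP => /andP[Hxa]. rewrite mem_Useq => /hasP [i Hi Hxi].
    have Hai : a <> i by move=> E; subst; rewrite Hi in Hal.
    have Hil : i \in a :: l by rewrite inE Hi orbT.
    have := Hd a i (mem_head a l) Hil Hai.
    rewrite -setI_eq0 => /eqP/setP/(_ x). by rewrite inE Hxa Hxi in_set0.
  exists (sg * (-1) ^ (ninv (Is a) J)); split.
    apply Rmult_integral_contrapositive; split => //; apply pow_nonzero; lra.
  move=> K.
  have Hfun : foldr (@gmul m) (gbasis set0) [seq gbasis (Is i) | i <- l] =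
      fun K => sg * gbasis J K by apply functional_extensionality; apply Hl.
  rewrite Hfun /gmul.
  rewrite (big_only_fin (a := Is a)); [|exact: Rplus_0_l|exact: Rplus_0_r|].
  2: { move=> I HI. apply big_idx; first exact: Rplus_0_l.
       move=> J'. rewrite /gbasis (negbTE HI); ring. }
  rewrite (big_only_fin (a := J)); [|exact: Rplus_0_l|exact: Rplus_0_r|].
  2: { move=> J' HJ'. rewrite /gbasis (negbTE HJ'); ring. }
  rewrite /gbasis !eqxx big_cons /gsign HdJ /=.
  case: (K == _); ring.
Qed.

Lemma count_ge2 (P : pred nat) (l : seq nat) i j :
  i \in l -> j \in l -> i <> j -> P i -> P j -> (2 <= count P l)%N.
Proof.
have cnt1 : forall x (s : seq nat), x \in s -> P x -> (0 < count P s)%N.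
  move=> x s Hx Px; rewrite -has_count; apply/hasP; by exists x.
elim: l => [|a l IH] //=. rewrite !inE => Hi Hj Hij Pi Pj.
case: (eqVneq i a) => [Eia|Nia].
- subst a. have Hj' : j \in l.
    move: Hj; case: (eqVneq j i) => // E; by [move: Hij; rewrite E].
  have := cnt1 _ _ Hj' Pj. rewrite Pi. lia.
- move: Hi; rewrite (negbTE Nia) /= => Hi.
  case: (eqVneq j a) => [Eja|Nja].
  + subst a. have := cnt1 _ _ Hi Pi. rewrite Pj. lia.
  + move: Hj; rewrite (negbTE Nja) /= => Hj.
    have := IH Hi Hj Hij Pi Pj. lia.
Qed.

Lemma pow2_inj (a b : nat) : 2 ^ a = 2 ^ b -> a = b.
Proof.
move=> H. destruct (Nat.lt_total a b) as [H1|[H1|H1]] => //.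
- have := Rlt_pow 2 a b ltac:(lra) H1. lra.
- have := Rlt_pow 2 b a ltac:(lra) H1. lra.
Qed.

Lemma sj_pow m (j0 : 'I_m) K : sj j0 K = 2 ^ (nat_of_bool (j0 \in K)).
Proof. rewrite /sj; case: (j0 \in K) => /=; ring. Qed.

Lemma prodR_pow m (j0 : 'I_m) (Is : nat -> {set 'I_m}) l :
  prodR (fun i => sj j0 (Is i)) l = 2 ^ (count (fun i => j0 \in Is i) l).
Proof.
elim: l => [|a l IH]; rewrite /prodR /=; first done.
rewrite -/(prodR _ l) IH sj_pow -pow_add. done.
Qed.

Lemma pcast_pcast (E : slcs) c (w : par E false) b :
  b = false -> pcast E b c (pcast E false b w) = pcast E false c w.
Proof. by move->. Qed.

Theorem mainTheorem2 (k : option nat) (E F : slcs)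
  (U : forall n, ebar E n -> Prop) (f : forall n, ebar E n -> ebar F n)
  (HU : is_open_subfunctor k U) (Hf : is_nat_trans k U f)
  (Hs : forall n, inGr k n -> bsmooth (U n) (f n))
  (n m : nat) (Hn : (0 < n)%N) (Hm : (0 < m)%N) (Hmk : inGr k m)
  (x0 : sev E) (Hx : U 0%N (embed (gbasis (m:=0) set0) false x0))
  (Is : nat -> {set 'I_m}) (ys : nat -> ebar E m)
  (HI : forall i, (i < n)%N -> Is i != set0)
  (Hy : forall i, (i < n)%N -> exists w : par E (odd #|Is i|),
          ys i = embed (gbasis (Is i)) (odd #|Is i|) w)
  (D : ebar E m -> seq (ebar E m) -> ebar F m)
  (HD : is_dfamily (U m) (f m) D) :
  let x := embed (gbasis (m:=m) set0) false x0 in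
  let v := D x [seq ys i | i <- iota 0 n] in
  let l := #|\bigcup_(i < n) Is i| in
  (exists w : par F (odd l),
     v = embed (foldr (@gmul m) (gbasis set0) [seq gbasis (Is i) | i <- iota 0 n])
               (odd l) w) /\
  (~ (forall i j, (i < n)%N -> (j < n)%N -> i <> j -> [disjoint Is i & Is j]) ->
     v = vzero).
Proof.
move=> x v l.
have Hm0 : inGr k 0 by rewrite /inGr; case: k {HU Hf Hs Hmk Hx}.
have Hxm : U m x.
  have Hinc : ebar_map E (@inc m) (embed (gbasis (m:=0) set0) false x0) = x.
    apply functional_extensionality_dep => J.
    rewrite /ebar_map (big_only_fin (a:=set0)); [|exact: vadd0|exact: vaddr0|].
    2: { move=> I HI'; by move: HI'; rewrite (set0_I0 I) eqxx. }
    rewrite /x /embed pcast_scal pcast_pcast; last by rewrite cards0.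
    rewrite /inc /gbasis !eqxx vscal1. by case: (J == set0).
  rewrite -Hinc. exact: (proj2 HU 0%N m (@inc m) Hm0 Hmk (inc_grhom m) _ Hx).
have key : forall (j0 : 'I_m) (K : {set 'I_m}), (nat_of_bool (j0 \in K)) <> count (fun i => j0 \in Is i) (iota 0 n) ->
    v K = vzero.
  move=> j0 K Hne.
  have Hdx : dg (sj j0) x = x.
    apply functional_extensionality_dep => J; rewrite /dg /x /embed /gbasis.
    case: eqP => [->|_].
    - by rewrite /sj in_set0 /= vscal1.
    - by rewrite !vscal0 vscalx0.
  have Hys : [seq dg (sj j0) y | y <- [seq ys i | i <- iota 0 n]] =
             [seq vscal (sj j0 (Is i)) (ys i) | i <- iota 0 n].
    rewrite -map_comp; apply eq_in_map => i; rewrite mem_iota add0n => /andP[_ Hi] /=.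
    have [w ->] := Hy i Hi. apply functional_extensionality_dep => J.
    rewrite /dg /embed /= /eb_scal /gbasis. case: eqP => [->|_] //.
    by rewrite !vscal0 !vscalx0.
  have Hc : forall i, sj j0 (Is i) <> 0 by move=> i; rewrite /sj; case: ifP => _; lra.
  have E1 := nat_all HU Hf Hmk HD j0 [seq ys i | i <- iota 0 n] Hxm.
  rewrite Hdx Hys (scale_all (HU.1 m Hmk) HD (cs := fun i => sj j0 (Is i)) ys Hc (iota 0 n) Hxm) in E1.
  have E2 := f_equal (fun g => g K) E1. rewrite /= /eb_scal /dg in E2.
  apply: (vscal_inj E2). rewrite prodR_pow sj_pow => Hp.
  apply Hne. symmetry. exact: pow2_inj.
case: (classic (forall i j, (i < n)%N -> (j < n)%N -> i <> j -> [disjoint Is i & Is j])) => Hdis.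
- split; last by move=> H; exfalso; apply H.
  have [sg [Hsg HP]] := @prod_basis m Is (iota 0 n) (iota_uniq 0 n)
    (fun i j Hi Hj Hij => Hdis i j
       ltac:(by move: Hi; rewrite mem_iota add0n => /andP[])
       ltac:(by move: Hj; rewrite mem_iota add0n => /andP[]) Hij).
  have HUs : \bigcup_(i <- iota 0 n) Is i = \bigcup_(i < n) Is i.
    by apply/setP => y; rewrite mem_Useq mem_Uord.
  exists (vscal (/sg) (v (\bigcup_(i < n) Is i))).
  apply functional_extensionality_dep => K.
  rewrite /embed HP HUs /gbasis. case: eqP => [->|HK].
  + rewrite /l Rmult_1_r pcast_id vscalA Rinv_r // vscal1. done.
  + rewrite Rmult_0_r vscal0.
    have [j0 Hj0] : exists j0, (j0 \in K) != (j0 \in \bigcup_(i < n) Is i).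
      apply NNPP => Hno; apply HK; apply/setP => j0.
      case: (boolP ((j0 \in K) == (j0 \in \bigcup_(i < n) Is i))) => [/eqP //|Hn'].
      exfalso; apply Hno; by exists j0.
    apply (key j0 K). move: Hj0; rewrite mem_Uord has_count.
    case: (j0 \in K); case: (count _ _) => [|c] //=.
- have [i [j [Hi [Hj [Hij Hnd]]]]] : exists i j, (i < n)%N /\ (j < n)%N /\ i <> j /\
      ~~ [disjoint Is i & Is j].
    apply NNPP => Hno; apply Hdis => i j Hi Hj Hij.
    apply/negPn/negP => Hnd. apply Hno; by exists i, j.
  move: Hnd; rewrite -setI_eq0 => /set0Pn [j0]; rewrite inE => /andP [H1 H2].
  have Hv : v = vzero.
    apply functional_extensionality_dep => K. apply (key j0 K).
    have : (2 <= count (fun i => j0 \in Is i) (iota 0 n))%N.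
      apply: (count_ge2 (i:=i) (j:=j)) => //.
      + by rewrite mem_iota add0n Hi.
      + by rewrite mem_iota add0n Hj.
    move: (count _ _) => c Hc Ec. rewrite -Ec in Hc. by case: (j0 \in K) Hc.
  split; last done.
  exists vzero. rewrite Hv. apply functional_extensionality_dep => K.
  by rewrite /embed pcast0 vscalx0.
Qed.
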